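(* Let $\mathcal{C}$ be the MILP consisting of constraints (C1)–(C6) below for a binary tree ensemble $\mathcal{E}$, a set $F\subseteq\mathcal{F}$ of sensitive features and a gap $g$. Then the set of feasible solutions of $\mathcal{C}$ equals the set of feasible solutions of the MILP obtained by adding to $\mathcal{C}$ the constraints (UnAff) $l^{(1)}_n = l^{(2)}_n$ for every unaffected leaf $n\in\mathcal{U}$, and (Aff-bin) $\sum_{n\in\mathcal{A}\setminus\mathcal{U}}\left(l^{(1)}_n\, n.val - l^{(2)}_n\, n.val\right)\ge 2\delta$.
   Context: A decision tree is either a leaf $n$ with real value $n.val$ or an internal node with guard $X_f<\tau$ (feature $f$, constant $\tau$) and children $n.yes$ (taken when $x_f<\tau$) and $n.no$. A binary tree ensemble $\mathcal{E}$ is a finite set of such trees over feature set $\mathcal{F}$. For each feature $f$, let $\tau_{f1}<\tau_{f2}<\dots<\tau_{fK_f}$ be the distinct thresholds of guards on $f$ in the ensemble. Let $\mathcal{A}$ be the set of all leaves of all trees. For each internal node $n$, $TSet(n)$ is the set of leaves of the subtree rooted at $n.yes$ and $FSet(n)$ those of the subtree rooted at $n.no$. Let $g$ with $0\le g<0.5$ and $\delta=\mathrm{Sigmoid}^{-1}(0.5+g)$, where $\mathrm{Sigmoid}(z)=1/(1+e^{-z})$. Variables: for each copy $c\in\{1,2\}$, binary variables $p^{(c)}_{fk}\in\{0,1\}$ for every feature $f$ and $k\in\{1,\dots,K_f\}$ (intended meaning: $X_f<\tau_{fk}$), and continuous variables $0\le l^{(c)}_n\le 1$ for every leaf $n\in\mathcal{A}$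 (intended meaning: leaf $n$ is reached). Constraints of $\mathcal{C}$ (for each $c\in\{1,2\}$ where applicable): (C1) $p^{(c)}_{f1}\le p^{(c)}_{f2}\le\dots\le p^{(c)}_{fK_f}$ for each feature $f$; (C2) for each tree, the sum of $l^{(c)}_n$ over its leaves equals $1$; (C3) for each root node with guard $X_f<\tau_{fk}$: $1-\sum_{n\in FSet}l^{(c)}_n = p^{(c)}_{fk}=\sum_{n\in TSet}l^{(c)}_n$; (C4) for each non-root internal node with guard $X_f<\tau_{fk}$: $1-\sum_{n\in FSet}l^{(c)}_n \ge p^{(c)}_{fk}\ge\sum_{n\in TSet}l^{(c)}_n$; (C5) $p^{(1)}_{fk}=p^{(2)}_{fk}$ for every feature $f\notin F$ and every $k$; (C6) $\sum_{n\in\mathcal{A}}l^{(1)}_n\, n.val\ge\delta$ and $\sum_{n\in\mathcal{A}}l^{(2)}_n\, n.val\le-\delta$. A leaf is unaffected if no guard on the path from its tree's root to it involves a feature of $F$; $\mathcal{U}$ denotes the set of unaffected leaves. *)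

(* Defs.v *)
From Stdlib Require Import Reals List Lra.
Import ListNotations.
Open Scope R_scope.

(** Decision trees: a leaf with a real value, or an internal node with guard
    X_f < tau and children yes (taken when x_f < tau) and no. *)
Inductive tree : Type :=
| Leaf (val : R)
| Node (f : nat) (tau : R) (yes no : tree).

Definition ensemble := list tree.

(** Leaves of a tree, identified by their path from the root
    (true = yes-branch, false = no-branch), with their value and the list
    of features of the guards on the path from the root to them. *)
Fixpoint leaves (t : tree) : list (list bool * (R * list nat)) :=
  match t with
  | Leaf v => [([], (v, []))]
  | Node f _ y n =>
      map (fun x => (true :: fst x, (fst (snd x), f :: snd (snd x)))) (leaves y)
      ++ map (fun x => (false :: fst x, (fst (snd x), f :: snd (snd x)))) (leaves n)
  end.

Fixpoint nodes (t : tree) : list (list bool * (nat * R * tree * tree)) :=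
  match t with
  | Leaf _ => []
  | Node f tau y n =>
      ([], (f, tau, y, n))
      :: map (fun x => (true :: fst x, snd x)) (nodes y)
      ++ map (fun x => (false :: fst x, snd x)) (nodes n)
  end.

Definition lsum (xs : list R) : R := fold_right Rplus 0 xs.

Definition is_thr (E : ensemble) (f : nat) (tau : R) : Prop :=
  exists i t q y n, nth_error E i = Some t /\ In (q, (f, tau, y, n)) (nodes t).

(** A candidate assignment of the MILP variables (both copies).
    p c f tau : the binary variable p^(c)_{fk} where tau = tau_{fk};
    l c i q   : the leaf variable of the leaf at path q of tree number i. *)
Record assignment := {
  p1 : nat -> R -> R;  p2 : nat -> R -> R;
  l1 : nat -> list bool -> R;  l2 : nat -> list bool -> R }.

Definition sumsub (l : nat -> list bool -> R) (i : nat) (q : list bool) (s : tree) : R :=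
  lsum (map (fun x => l i (q ++ fst x)) (leaves s)).

Definition ens_sum (E : ensemble) (h : nat -> list bool -> R -> list nat -> R) : R :=
  lsum (map (fun i => match nth_error E i with
                      | Some t => lsum (map (fun x => h i (fst x) (fst (snd x)) (snd (snd x))) (leaves t))
                      | None => 0 end) (seq 0 (length E))).

Definition Sigmoid (z : R) : R := 1 / (1 + exp (- z)).
Definition Sigmoid_inv (y : R) : R := ln (y / (1 - y)).
Definition delta (g : R) : R := Sigmoid_inv (1/2 + g).

Definition copy_constraints (E : ensemble) (p : nat -> R -> R) (l : nat -> list bool -> R) : Prop :=
  (forall f tau, is_thr E f tau -> p f tau = 0 \/ p f tau = 1) /\
  (forall i t, nth_error E i = Some t -> forall x, In x (leaves t) ->
       0 <= l i (fst x) <= 1) /\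
  (* (C1) *)
  (forall f tau tau', is_thr E f tau -> is_thr E f tau' -> tau < tau' ->
       p f tau <= p f tau') /\
  (* (C2) *)
  (forall i t, nth_error E i = Some t -> sumsub l i [] t = 1) /\
  (* (C3) root nodes *)
  (forall i t f tau y n, nth_error E i = Some t -> t = Node f tau y n ->
       1 - sumsub l i [false] n = p f tau /\ p f tau = sumsub l i [true] y) /\
  (* (C4) non-root internal nodes *)
  (forall i t q f tau y n, nth_error E i = Some t -> In (q, (f, tau, y, n)) (nodes t) ->
       q <> [] ->
       1 - sumsub l i (q ++ [false]) n >= p f tau /\
       p f tau >= sumsub l i (q ++ [true]) y).

Definition feasible_C (E : ensemble) (F : list nat) (g : R) (s : assignment) : Prop :=
  copy_constraints E (p1 s) (l1 s) /\
  copy_constraints E (p2 s) (l2 s) /\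
  (* (C5) *)
  (forall f tau, ~ In f F -> is_thr E f tau -> p1 s f tau = p2 s f tau) /\
  (* (C6) *)
  ens_sum E (fun i q v _ => l1 s i q * v) >= delta g /\
  ens_sum E (fun i q v _ => l2 s i q * v) <= - delta g.

(** A leaf is affected iff some guard on its path uses a feature of F. *)
Definition affectedb (F : list nat) (fs : list nat) : bool :=
  existsb (fun f => existsb (Nat.eqb f) F) fs.

Definition UnAff (E : ensemble) (F : list nat) (s : assignment) : Prop :=
  forall i t, nth_error E i = Some t -> forall x, In x (leaves t) ->
    (forall f, In f (snd (snd x)) -> ~ In f F) ->
    l1 s i (fst x) = l2 s i (fst x).

Definition AffBin (E : ensemble) (F : list nat) (g : R) (s : assignment) : Prop :=
  ens_sum E (fun i q v fs => if affectedb F fs then l1 s i q * v - l2 s i q * v else 0)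
    >= 2 * delta g.

(* Main.v *)
Require Import Defs.
From Stdlib Require Import Reals List Lra.
Import ListNotations.
Open Scope R_scope.

Lemma lsum_app a b : lsum (a ++ b) = lsum a + lsum b.
Proof. induction a; simpl; [lra| rewrite IHa; lra]. Qed.

Lemma lsum_ext {A} (f g : A -> R) l : (forall x, In x l -> f x = g x) ->
  lsum (map f l) = lsum (map g l).
Proof. intros H; now rewrite (map_ext_in f g l H). Qed.

Lemma lsum_minus {A} (f g : A -> R) l :
  lsum (map (fun x => f x - g x) l) = lsum (map f l) - lsum (map g l).
Proof. induction l; simpl; [lra| rewrite IHl; lra]. Qed.

Lemma lsum_nonneg {A} (f : A -> R) l : (forall x, In x l -> 0 <= f x) ->
  0 <= lsum (map f l).
Proof. induction l; simpl; intros H; [lra|].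
  assert (0 <= f a) by auto. assert (0 <= lsum (map f l)) by auto. lra. Qed.

Fixpoint ind (p : nat -> R -> R) (s : tree) (r : list bool) : R :=
  match s, r with
  | Leaf _, _ => 1
  | Node f tau y n, true :: r' => p f tau * ind p y r'
  | Node f tau y n, false :: r' => (1 - p f tau) * ind p n r'
  | Node _ _ _ _, [] => 1
  end.

Lemma sumsub_node l i q f tau y n :
  sumsub l i q (Node f tau y n) = sumsub l i (q ++ [true]) y + sumsub l i (q ++ [false]) n.
Proof.
  unfold sumsub; simpl. rewrite map_app, lsum_app, !map_map. simpl.
  f_equal; apply lsum_ext; intros; now rewrite <- app_assoc.
Qed.

Lemma main_lemma p l i : forall s q S,
  (forall r f tau y n, In (r,(f,tau,y,n)) (nodes s) ->
     (p f tau = 0 \/ p f tau = 1) /\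
     1 - sumsub l i (q ++ r ++ [false]) n >= p f tau /\
     p f tau >= sumsub l i (q ++ r ++ [true]) y) ->
  (forall x, In x (leaves s) -> 0 <= l i (q ++ fst x)) ->
  (S = 0 \/ S = 1) -> sumsub l i q s = S ->
  forall x, In x (leaves s) -> l i (q ++ fst x) = S * ind p s (fst x).
Proof.
  induction s as [v | f tau y IHy n IHn]; intros q S Hn Hl HS Hsum x Hx.
  - simpl in Hx. destruct Hx as [<-|[]]. simpl.
    unfold sumsub in Hsum; simpl in Hsum. lra.
  - rewrite sumsub_node in Hsum.
    destruct (Hn [] f tau y n) as [Hp [H1 H2]]; [simpl; auto|].
    simpl in H1, H2.
    assert (Ly : forall x, In x (leaves y) -> 0 <= l i ((q ++ [true]) ++ fst x)).
    { intros z Hz. rewrite <- app_assoc. apply (Hl (true :: fst z, (fst (snd z), f :: snd (snd z)))).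
      simpl. apply in_or_app; left. now apply (in_map (fun x => (true :: fst x, (fst (snd x), f :: snd (snd x))))). }
    assert (Ln : forall x, In x (leaves n) -> 0 <= l i ((q ++ [false]) ++ fst x)).
    { intros z Hz. rewrite <- app_assoc. apply (Hl (false :: fst z, (fst (snd z), f :: snd (snd z)))).
      simpl. apply in_or_app; right. now apply (in_map (fun x => (false :: fst x, (fst (snd x), f :: snd (snd x))))). }
    assert (Sy0 : 0 <= sumsub l i (q ++ [true]) y) by (apply lsum_nonneg; auto).
    assert (Sn0 : 0 <= sumsub l i (q ++ [false]) n) by (apply lsum_nonneg; auto).
    assert (Ey : sumsub l i (q ++ [true]) y = S * p f tau) by (destruct HS, Hp; subst; nra).
    assert (En : sumsub l i (q ++ [false]) n = S * (1 - p f tau)) by (destruct HS, Hp; subst; nra).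
    simpl in Hx. apply in_app_or in Hx. destruct Hx as [Hx|Hx]; apply in_map_iff in Hx;
      destruct Hx as [z [<- Hz]]; simpl.
    + replace (q ++ true :: fst z) with ((q ++ [true]) ++ fst z) by now rewrite <- app_assoc.
      rewrite (IHy (q ++ [true]) (S * p f tau)); auto.
      * lra.
      * intros r f' tau' y' n' Hin. rewrite <- !app_assoc.
        apply (Hn (true :: r) f' tau' y' n'). simpl. right. apply in_or_app; left.
        now apply (in_map (fun x => (true :: fst x, snd x)) _ (r, (f', tau', y', n'))).
      * destruct HS as [->| ->]; destruct Hp as [Hp|Hp]; rewrite Hp; [left|left|left|right]; ring.
    + replace (q ++ false :: fst z) with ((q ++ [false]) ++ fst z) by now rewrite <- app_assoc.
      rewrite (IHn (q ++ [false]) (S * (1 - p f tau))); auto.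
      * lra.
      * intros r f' tau' y' n' Hin. rewrite <- !app_assoc.
        apply (Hn (false :: r) f' tau' y' n'). simpl. right. apply in_or_app; right.
        now apply (in_map (fun x => (false :: fst x, snd x)) _ (r, (f', tau', y', n'))).
      * destruct HS as [->| ->]; destruct Hp as [Hp|Hp]; rewrite Hp; [left|left|right|left]; ring.
Qed.

Lemma ind_eq p1 p2 (Q : nat -> R -> Prop) : forall s x,
  (forall r f tau y n, In (r,(f,tau,y,n)) (nodes s) -> Q f tau) ->
  In x (leaves s) ->
  (forall f, In f (snd (snd x)) -> forall tau, Q f tau -> p1 f tau = p2 f tau) ->
  ind p1 s (fst x) = ind p2 s (fst x).
Proof.
  induction s as [v | f tau y IHy n IHn]; intros x HQ Hx Hp.
  - simpl in Hx. destruct Hx as [<-|[]]. reflexivity.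
  - simpl in Hx. apply in_app_or in Hx. destruct Hx as [Hx|Hx]; apply in_map_iff in Hx;
      destruct Hx as [z [<- Hz]]; simpl in *.
    + rewrite (Hp f (or_introl eq_refl) tau) by (apply (HQ [] f tau y n); auto).
      f_equal. apply IHy; auto.
      intros r f' tau' y' n' Hin. apply (HQ (true :: r) f' tau' y' n'). right. apply in_or_app; left.
      now apply (in_map (fun x => (true :: fst x, snd x)) _ (r, (f', tau', y', n'))).
    + rewrite (Hp f (or_introl eq_refl) tau) by (apply (HQ [] f tau y n); auto).
      f_equal. apply IHn; auto.
      intros r f' tau' y' n' Hin. apply (HQ (false :: r) f' tau' y' n'). right. apply in_or_app; right.
      now apply (in_map (fun x => (false :: fst x, snd x)) _ (r, (f', tau', y', n'))).
Qed.

Lemma root_node t f tau y n : In ([], (f, tau, y, n)) (nodes t) -> t = Node f tau y n.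
Proof.
  destruct t; simpl; [tauto|]. intros [H|H]; [now inversion H|].
  apply in_app_or in H; destruct H as [H|H]; apply in_map_iff in H;
    destruct H as [z [H _]]; discriminate.
Qed.

Lemma leaf_value E p l i t : copy_constraints E p l -> nth_error E i = Some t ->
  forall x, In x (leaves t) -> l i (fst x) = ind p t (fst x).
Proof.
  intros [Hb [Hl [_ [H2 [H3 H4]]]]] Ht x Hx.
  rewrite <- (Rmult_1_l (ind p t (fst x))).
  apply (main_lemma p l i t [] 1); auto.
  - intros r f tau y n Hin. simpl. split.
    + apply Hb. exists i, t, r, y, n. auto.
    + destruct r as [|b r].
      * apply root_node in Hin. destruct (H3 i t f tau y n Ht Hin). simpl. lra.
      * apply (H4 i t (b :: r) f tau y n Ht Hin). discriminate.
  - intros z Hz. simpl. apply (Hl i t Ht z Hz).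
Qed.

Lemma ens_sum_ext E h1 h2 :
  (forall i t, nth_error E i = Some t -> forall x, In x (leaves t) ->
     h1 i (fst x) (fst (snd x)) (snd (snd x)) = h2 i (fst x) (fst (snd x)) (snd (snd x))) ->
  ens_sum E h1 = ens_sum E h2.
Proof.
  intros H. unfold ens_sum. f_equal. apply map_ext. intros i.
  destruct (nth_error E i) eqn:Ht; auto. apply lsum_ext. intros x Hx. eapply H; eauto.
Qed.

Lemma ens_sum_minus E h1 h2 :
  ens_sum E (fun i q v fs => h1 i q v fs - h2 i q v fs) = ens_sum E h1 - ens_sum E h2.
Proof.
  unfold ens_sum. rewrite <- lsum_minus. f_equal. apply map_ext. intros i.
  destruct (nth_error E i); [apply lsum_minus | ring].
Qed.

Lemma unaff_of F fs : affectedb F fs = false -> forall f, In f fs -> ~ In f F.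
Proof.
  intros H f Hf HF. unfold affectedb in H.
  assert (existsb (fun f => existsb (Nat.eqb f) F) fs = true); [|congruence].
  apply existsb_exists. exists f. split; auto. apply existsb_exists. exists f.
  split; auto. apply Nat.eqb_refl.
Qed.

Theorem theorem3 (E : ensemble) (F : list nat) (g : R) :
  0 <= g < 1/2 ->
  forall s : assignment,
    feasible_C E F g s <-> (feasible_C E F g s /\ UnAff E F s /\ AffBin E F g s).
Proof.
  intros _ s. split; [|tauto]. intros Hf.
  destruct Hf as [C1 [C2 [C5 [C6a C6b]]]].
  assert (UA : UnAff E F s).
  { intros i t Ht x Hx Hun.
    rewrite (leaf_value E _ _ i t C1 Ht x Hx), (leaf_value E _ _ i t C2 Ht x Hx).
    apply (ind_eq _ _ (is_thr E) t x); auto.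
    all: try (intros r f tau y n Hin; exists i, t, r, y, n; auto).
    all: intros f Hin tau Hq; apply C5; auto. }
  split; [unfold feasible_C; tauto|]. split; auto.
  unfold AffBin.
  rewrite (ens_sum_ext E _ (fun i q v fs => l1 s i q * v - l2 s i q * v)).
  - rewrite (ens_sum_minus E (fun i q v _ => l1 s i q * v) (fun i q v _ => l2 s i q * v)). lra.
  - intros i t Ht x Hx. simpl.
    destruct (affectedb F (snd (snd x))) eqn:Ha; auto.
    rewrite (UA i t Ht x Hx (unaff_of F _ Ha)). ring.
Qed.
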